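(* Let $P$ be a 6-stack. If $Q$ is a proper retract of $P$ which (with the induced order) is isomorphic to a tower of sections, then $Q$ is a 4-tower.
   Context: All posets are finite. For a poset $P$ and $p\in P$, the rank $r(p)$ of $p$ is the largest $m$ such that there is a chain $p_0<\dots<p_m=p$ in $P$. $P$ is ranked of rank $r(P)$ if every maximal chain has exactly $r(P)+1$ elements. For $0\le i\le j$, $P(i,j)=\{p\in P:i\le r(p)\le j\}$, $P(i)=P(i,i)$ (induced order). A subset $Q\subseteq P$ (induced order) is a retract of $P$ if there is an order-preserving $f:P\to Q$ with $f(q)=q$ for all $q\in Q$; it is proper if $Q\ne P$. The 6-crown $C_6$ is the poset on $\{x_0,x_1,x_2,y_0,y_1,y_2\}$ whose only strict comparabilities are $x_0<y_0>x_1<y_1>x_2<y_2>x_0$. A 6-stack is a ranked poset $P$ of rank $n\ge1$ such that $P(i,i+1)\cong C_6$ for each $0\le i<n$. The ordinal sum of posets $P_1,\dots,P_k$ ($k\ge1$) is their disjoint union ordered by the orders of the $P_i$ together with $p<q$ whenever $p\in P_i,q\in P_j,i<j$. A 4-tower is an ordinal sum of one or more two-element antichains. A section is either a two-element antichain or a poset on the set $\{[i,k]: 0\le i\le 2,\ 0\le k\le n\}$ (with $3(n+1)$ distinct elements), for some $n\ge 1$, such that: (1) $[i,k]<[i,l]$ whenever $0\le k<l\le n$; (2) for each $k$, $\{[0,k],[1,k],[2,k]\}$ is an antichain; (3) $[i,k]<[j,l]$ implies $[i+1,k]<[j+1,l]$ (first indices mod $3$); (4) for each $0\le k<n$ there are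 $i,j$ with $[i,k]\not<[j,k+1]$. A tower of sections is an ordinal sum of one or more sections. *)

(* Defs.v *)
(* Finite posets are given as a finType with a strict order
   relation [lt] (irreflexive, transitive); subposets carry the induced order. *)
From mathcomp Require Import all_boot.

Set Implicit Arguments.
Unset Strict Implicit.
Unset Printing Implicit Defensive.

Definition strict_order (T : finType) (lt : rel T) : Prop :=
  irreflexive lt /\ transitive lt.

Definition leR (T : finType) (lt : rel T) (x y : T) : bool := (x == y) || lt x y.

Definition is_chain (T : finType) (lt : rel T) (C : {set T}) : bool :=
  [forall x in C, forall y in C, (x == y) || lt x y || lt y x].

(* r(p) = largest m such that there is a chain p_0 < ... < p_m = p, i.e. the
   largest size (minus one) of a chain whose maximum is p *)
Definition rank (T : finType) (lt : rel T) (p : T) : nat :=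
  \max_(C : {set T} | [&& is_chain lt C, p \in C & [forall x in C, leR lt x p]])
     (#|C|).-1.

Definition maximal_chain (T : finType) (lt : rel T) (C : {set T}) : Prop :=
  is_chain lt C /\ forall D : {set T}, is_chain lt D -> C \subset D -> D = C.

Definition ranked_of_rank (T : finType) (lt : rel T) (n : nat) : Prop :=
  forall C : {set T}, maximal_chain lt C -> #|C| = n.+1.

Definition level (T : finType) (lt : rel T) (i j : nat) : {set T} :=
  [set p | i <= rank lt p <= j].

Definition ord_iso (T : finType) (lt : rel T) (A : {set T})
    (U : finType) (ltU : rel U) (B : {set U}) : Prop :=
  exists f : T -> U,
    [/\ {in A &, injective f}, f @: A = B &
        {in A &, forall x y, ltU (f x) (f y) = lt x y}].

(* The 6-crown: inl i = x_i, inr j = y_j ; x_i < y_i and x_i < y_{i-1} *)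
Definition C6T : finType := ('I_3 + 'I_3)%type.
Definition C6_lt : rel C6T := fun a b =>
  match a, b with
  | inl i, inr j => (val j == val i) || ((val j).+1 %% 3 == val i)
  | _, _ => false
  end.

Definition six_stack (T : finType) (lt : rel T) : Prop :=
  strict_order lt /\
  exists n, 0 < n /\ ranked_of_rank lt n /\
    forall i, i < n -> ord_iso lt (level lt i i.+1) C6_lt [set: C6T].

Definition order_preserving (T : finType) (lt : rel T) (f : T -> T) : Prop :=
  forall x y, leR lt x y -> leR lt (f x) (f y).

Definition is_retract (T : finType) (lt : rel T) (Q : {set T}) : Prop :=
  exists f : T -> T,
    [/\ forall x, f x \in Q, order_preserving lt f & forall q, q \in Q -> f q = q].

Definition AC2_lt : rel bool := fun _ _ => false.

Definition succ3 (i : 'I_3) : 'I_3 := inord ((val i).+1 %% 3).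

(* a (non-antichain) section order on {[i,k] : 0 <= i <= 2, 0 <= k <= n} *)
Definition section_rel (n : nat) (R : rel ('I_3 * 'I_n.+1)) : Prop :=
  [/\ strict_order R,
      (forall (i : 'I_3) (k l : 'I_n.+1), k < l -> R (i, k) (i, l)),
      (forall (k : 'I_n.+1) (i j : 'I_3), ~~ R (i, k) (j, k)),
      (forall (i j : 'I_3) (k l : 'I_n.+1),
          R (i, k) (j, l) -> R (succ3 i, k) (succ3 j, l)) &
      (forall k : 'I_n.+1, k < n ->
          exists i j : 'I_3, ~~ R (i, k) (j, inord k.+1))].

Definition is_section (U : finType) (lt : rel U) (B : {set U}) : Prop :=
  ord_iso lt B AC2_lt [set: bool] \/
  exists n (R : rel ('I_3 * 'I_n.+1)),
    [/\ 0 < n, section_rel R & ord_iso lt B R [set: ('I_3 * 'I_n.+1)%type]].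

Definition ordinal_sum_of (U : finType) (lt : rel U)
    (good : {set U} -> Prop) : Prop :=
  exists k (blk : U -> 'I_k),
    [/\ 0 < k, forall b : 'I_k, good [set x | blk x == b] &
        forall x y, blk x != blk y -> lt x y = (blk x < blk y)].

Definition tower_of_sections (U : finType) (lt : rel U) : Prop :=
  strict_order lt /\ ordinal_sum_of lt (is_section lt).

Definition four_tower (U : finType) (lt : rel U) : Prop :=
  strict_order lt /\
  ordinal_sum_of lt (fun B => ord_iso lt B AC2_lt [set: bool]).

(* Main.v *)
Require Import Defs.
From mathcomp Require Import all_boot zify.
Set Implicit Arguments. Unset Strict Implicit. Unset Printing Implicit Defensive.

Definition cl (i j : 'I_3) := C6_lt (inl i) (inr j).
Definition o0 : 'I_3 := @Ordinal 3 0 isT.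
Definition o1 : 'I_3 := @Ordinal 3 1 isT.
Definition o2 : 'I_3 := @Ordinal 3 2 isT.
Ltac o3 i := case: i => [[|[|[|?]]] ?] //.
Ltac wit := (exists o0 + exists o1 + exists o2).

Lemma BF1 j : exists i, ~~ cl i j. Proof. o3 j; wit; done. Qed.
Lemma BF1u i : exists j, ~~ cl i j. Proof. o3 i; wit; done. Qed.
Lemma BF2 j : exists i1 i2, [&& i1 != i2, cl i1 j & cl i2 j].
Proof. o3 j; wit; wit; done. Qed.
Lemma BF2u i : exists j1 j2, [&& j1 != j2, cl i j1 & cl i j2].
Proof. o3 i; wit; wit; done. Qed.
Lemma BF3 j1 j2 : j1 != j2 -> exists i, cl i j1 && cl i j2.
Proof. o3 j1; o3 j2; wit; done. Qed.
Lemma BF3u i1 i2 : i1 != i2 -> exists j, cl i1 j && cl i2 j.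
Proof. o3 i1; o3 i2; wit; done. Qed.
Lemma BF4 i j1 j2 : j1 != j2 -> cl i j1 || cl i j2.
Proof. o3 i; o3 j1; o3 j2. Qed.
Lemma BF4u j i1 i2 : i1 != i2 -> cl i1 j || cl i2 j.
Proof. o3 j; o3 i1; o3 i2. Qed.
Lemma BF5 (i1 i2 i3 i4 : 'I_3) :
  [&& i1 != i2, i1 != i3, i1 != i4, i2 != i3, i2 != i4 & i3 != i4] = false.
Proof. o3 i1; o3 i2; o3 i3; o3 i4. Qed.
Lemma BF6 (i : 'I_3) : [&& i != succ3 i, i != succ3 (succ3 i) & succ3 i != succ3 (succ3 i)].
Proof. o3 i; rewrite /succ3 /=; apply/and3P; split; apply/eqP => /(congr1 val); rewrite /= !inordK //. Qed.
Lemma ex_maxF (T : finType) (P : pred T) (F : T -> nat) x0 :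
  P x0 -> exists2 x, P x & forall y, P y -> F y <= F x.
Proof.
move=> P0.
have [|x Px Hx] := @eq_bigmax_cond T P F; first by apply/card_gt0P; exists x0.
exists x => // y Py; rewrite -Hx; exact: (leq_bigmax_cond (P := mem P)).
Qed.

Definition rcond (T : finType) (lt : rel T) (p : T) (C : {set T}) :=
  [&& is_chain lt C, p \in C & [forall x in C, leR lt x p]].

Lemma rank_ge (T : finType) (lt : rel T) p C : rcond lt p C -> (#|C|).-1 <= rank lt p.
Proof. move=> H; exact: (leq_bigmax_cond (P := fun C => rcond lt p C)). Qed.

Lemma rank_att (T : finType) (lt : rel T) p :
  exists2 C, rcond lt p C & rank lt p = (#|C|).-1.
Proof.
have H1 : rcond lt p [set p].
  rewrite /rcond set11 /=; apply/andP; split.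
  - apply/forall_inP => x /set1P ->; apply/forall_inP => y /set1P ->; by rewrite eqxx.
  - apply/forall_inP => x /set1P ->; by rewrite /leR eqxx.
have [C HC HM] := @ex_maxF _ (fun C : {set T} => rcond lt p C) (fun C => (#|C|).-1) _ H1.
exists C => //; apply/eqP; rewrite eqn_leq rank_ge // andbT.
by apply/bigmax_leqP => D HD; apply: HM.
Qed.

Lemma rank_lt (T : finType) (lt : rel T) : irreflexive lt -> transitive lt ->
  forall x y, lt x y -> rank lt x < rank lt y.
Proof.
move=> Hirr Htr x y Hxy.
have [C /and3P [Hch HxC Hle] ->] := rank_att lt x.
have HleC : forall z, z \in C -> lt z y.
  move=> z /(forall_inP Hle); rewrite /leR => /orP [/eqP-> //|Hzx].
  exact: Htr Hzx Hxy.
have HyC : y \notin C.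
  by apply/negP => /HleC; rewrite Hirr.
have HD : rcond lt y (y |: C).
  apply/and3P; split; last first.
  - apply/forall_inP => z; rewrite in_setU1 /leR => /orP [/eqP->|/HleC ->]; by rewrite ?eqxx ?orbT.
  - by rewrite setU11.
  - apply/forall_inP => z; rewrite in_setU1 => /orP [/eqP->|Hz];
      apply/forall_inP => w; rewrite in_setU1 => /orP [/eqP->|Hw].
    + by rewrite eqxx.
    + by rewrite (HleC _ Hw) !orbT.
    + by rewrite (HleC _ Hz) orbT.
    + exact: (forall_inP (forall_inP Hch z Hz) w Hw).
have := rank_ge HD; rewrite cardsU1 HyC /=.
have : 0 < #|C| by apply/card_gt0P; exists x.
lia.
Qed.

Lemma chain_sub (T : finType) (lt : rel T) (C D : {set T}) :
  C \subset D -> is_chain lt D -> is_chain lt C.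
Proof.
move=> /subsetP sCD Hch; apply/forall_inP => x Hx; apply/forall_inP => y Hy.
exact: (forall_inP (forall_inP Hch x (sCD _ Hx)) y (sCD _ Hy)).
Qed.

Lemma rank_pred (T : finType) (lt : rel T) : irreflexive lt -> transitive lt ->
  forall p r, rank lt p = r.+1 -> exists2 z, lt z p & rank lt z = r.
Proof.
move=> Hirr Htr p r Hr.
have [C /and3P [Hch HpC Hle] HrC] := rank_att lt p.
have HC' : #|C :\ p| = r.+1 by rewrite (cardsD1 p C) HpC in HrC *; rewrite /= in HrC; lia.
have [z0 Hz0] : exists z0, z0 \in C :\ p by apply/card_gt0P; rewrite HC'.
have [z HzC HM] := @ex_maxF _ (mem (C :\ p)) (rank lt) _ Hz0.
move: (HzC); rewrite !inE => /andP [Hzp HzC'].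
have Hzl : lt z p.
  by move: (forall_inP Hle z HzC'); rewrite /leR (negbTE Hzp).
exists z => //.
have Hc : forall c, c \in C :\ p -> leR lt c z.
  move=> c Hc; move: (Hc); rewrite inE => /andP [_ HcC].
  move: (forall_inP (forall_inP Hch c HcC) z HzC'); rewrite /leR => /orP [/orP [->|->]|Hzc] //; first by rewrite orbT.
  by have := HM c Hc; rewrite leqNgt (rank_lt Hirr Htr Hzc).
have Hrc : rcond lt z (C :\ p).
  apply/and3P; split => //; last by apply/forall_inP.
  by apply: chain_sub Hch; apply: subsetDl.
have := rank_ge Hrc; rewrite HC' /=.
have := rank_lt Hirr Htr Hzl; lia.
Qed.

Lemma rank_le (T : finType) (lt : rel T) N : ranked_of_rank lt N ->
  forall p, rank lt p <= N.
Proof.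
move=> Hrk p.
have [C /and3P [Hch HpC Hle] ->] := rank_att lt p.
have H0 : is_chain lt C && (C \subset C) by rewrite Hch subxx.
have [D /andP [HchD HCD] HM] := @ex_maxF _ (fun D : {set T} => is_chain lt D && (C \subset D)) (fun D => #|D|) _ H0.
have HmD : maximal_chain lt D.
  split => // E HE HDE; apply/eqP; rewrite eq_sym eqEcard HDE /=.
  by apply: HM; rewrite HE (subset_trans HCD HDE).
have := Hrk D HmD; have := subset_leq_card HCD; lia.
Qed.

Record SS (T : finType) (lt : rel T) (N : nat) : Prop := {
  ss_irr : irreflexive lt; ss_tr : transitive lt; ss_pos : 0 < N;
  ss_rk : ranked_of_rank lt N;
  ss_cr : forall i, i < N -> ord_iso lt (level lt i i.+1) C6_lt [set: C6T] }.

Lemma crown (T : finType) (lt : rel T) N : SS lt N -> forall r, r < N ->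
  exists (a b : 'I_3 -> T),
   [/\ (forall i, rank lt (a i) = r) /\ (forall j, rank lt (b j) = r.+1),
       injective a /\ injective b,
       (forall x, rank lt x = r -> exists i, x = a i),
       (forall y, rank lt y = r.+1 -> exists j, y = b j) &
       (forall i j, lt (a i) (b j) = cl i j)].
Proof.
move=> H r Hr; have Hirr := ss_irr H; have Htr := ss_tr H.
have [g [Hinj Him Hlt]] := ss_cr H Hr.
have Hlev : forall x, (x \in level lt r r.+1) = (r <= rank lt x <= r.+1).
  by move=> x; rewrite inE.
have Hsurj : forall c, exists2 x, x \in level lt r r.+1 & g x = c.
  move=> c; have : c \in g @: level lt r r.+1 by rewrite Him inE.
  by case/imsetP=> x Hx ->; exists x.
have K1 : forall x, rank lt x = r -> exists i, g x = inl i.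
  move=> x Hx; case Hg: (g x) => [i|j]; first by exists i.
  have [w Hw Hgw] := Hsurj (inl j).
  have Hx' : x \in level lt r r.+1 by rewrite Hlev Hx leqnn leqnSn.
  have : lt w x by rewrite -Hlt // Hgw Hg /C6_lt /cl eqxx.
  move/(rank_lt Hirr Htr); move: Hw; rewrite Hlev; lia.
have K2 : forall y, rank lt y = r.+1 -> exists j, g y = inr j.
  move=> y Hy; have [z Hz Hrz] := rank_pred Hirr Htr Hy.
  have Hy' : y \in level lt r r.+1 by rewrite Hlev Hy leqnn leqnSn.
  have Hz' : z \in level lt r r.+1 by rewrite Hlev Hrz leqnn leqnSn.
  move: Hz; rewrite -Hlt //; case: (g y) => [i|j]; last by exists j.
  by case: (g z).
have [a Ha] : exists a : 'I_3 -> T, forall i, a i \in level lt r r.+1 /\ g (a i) = inl i.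
  apply: (@fin_all_exists _ (fun _ => T) (fun i x => x \in level lt r r.+1 /\ g x = inl i)) => i.
  have [x Hx Hg] := Hsurj (inl i); by exists x.
have [b Hb] : exists b : 'I_3 -> T, forall j, b j \in level lt r r.+1 /\ g (b j) = inr j.
  apply: (@fin_all_exists _ (fun _ => T) (fun j x => x \in level lt r r.+1 /\ g x = inr j)) => j.
  have [x Hx Hg] := Hsurj (inr j); by exists x.
have Ra : forall i, rank lt (a i) = r.
  move=> i; have [Hl Hg] := Ha i; move: (Hl); rewrite Hlev => /andP [H1 H2].
  have : rank lt (a i) = r \/ rank lt (a i) = r.+1 by lia.
  by case => // /K2 [j Hj]; rewrite Hg in Hj.
have Rb : forall j, rank lt (b j) = r.+1.
  move=> j; have [Hl Hg] := Hb j; move: (Hl); rewrite Hlev => /andP [H1 H2].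
  have : rank lt (b j) = r \/ rank lt (b j) = r.+1 by lia.
  by case => // /K1 [i Hi]; rewrite Hg in Hi.
exists a, b; split.
- by [].
- split=> [i i' E|j j' E].
  + by have := congr1 g E; rewrite (proj2 (Ha i)) (proj2 (Ha i')) => -[].
  + by have := congr1 g E; rewrite (proj2 (Hb j)) (proj2 (Hb j')) => -[].
- move=> x Hx; have [i Hi] := K1 x Hx; exists i; apply: Hinj.
  + by rewrite Hlev Hx leqnn leqnSn.
  + exact: (proj1 (Ha i)).
  + by rewrite Hi (proj2 (Ha i)).
- move=> y Hy; have [j Hj] := K2 y Hy; exists j; apply: Hinj.
  + by rewrite Hlev Hy leqnSn leqnn.
  + exact: (proj1 (Hb j)).
  + by rewrite Hj (proj2 (Hb j)).
- move=> i j; rewrite -Hlt; [by rewrite (proj2 (Ha i)) (proj2 (Hb j)) | exact: (proj1 (Ha i)) | exact: (proj1 (Hb j))].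
Qed.

Lemma c1d T lt N (H : @SS T lt N) y : 0 < rank lt y -> exists x, rank lt x = (rank lt y).-1 /\ ~~ lt x y.
Proof.
move=> Hy; have HN := rank_le (ss_rk H) y.
have Hr : (rank lt y).-1 < N by lia.
  have [a [b [[Ra Rb] [ia ib] Ca Cb Cl]]] := crown H Hr.
have [j ->] := Cb y (esym (ltn_predK Hy)).
have [i Hi] := BF1 j; exists (a i); by rewrite Ra Cl Rb.
Qed.

Lemma c1u T lt N (H : @SS T lt N) x : rank lt x < N -> exists y, rank lt y = (rank lt x).+1 /\ ~~ lt x y.
Proof.
move=> Hx; have [a [b [[Ra Rb] [ia ib] Ca Cb Cl]]] := crown H Hx.
have [i ->] := Ca x erefl.
have [j Hj] := BF1u i; exists (b j); by rewrite Ra Cl Rb.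
Qed.

Lemma c2d T lt N (H : @SS T lt N) y : 0 < rank lt y -> exists x1 x2,
  [/\ x1 != x2, rank lt x1 = (rank lt y).-1, rank lt x2 = (rank lt y).-1, lt x1 y & lt x2 y].
Proof.
move=> Hy; have HN := rank_le (ss_rk H) y.
have Hr : (rank lt y).-1 < N by lia.
  have [a [b [[Ra Rb] [ia ib] Ca Cb Cl]]] := crown H Hr.
have [j ->] := Cb y (esym (ltn_predK Hy)).
have [i1 [i2 /and3P [Hne H1 H2]]] := BF2 j; exists (a i1), (a i2).
rewrite !Ra !Cl Rb H1 H2; split => //.
by apply: contra Hne => /eqP /ia ->.
Qed.

Lemma c2u T lt N (H : @SS T lt N) x : rank lt x < N -> exists y1 y2,
  [/\ y1 != y2, rank lt y1 = (rank lt x).+1, rank lt y2 = (rank lt x).+1, lt x y1 & lt x y2].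
Proof.
move=> Hx; have [a [b [[Ra Rb] [ia ib] Ca Cb Cl]]] := crown H Hx.
have [i ->] := Ca x erefl.
have [j1 [j2 /and3P [Hne H1 H2]]] := BF2u i; exists (b j1), (b j2).
rewrite !Rb !Cl Ra H1 H2; split => //.
by apply: contra Hne => /eqP /ib ->.
Qed.

Lemma c3d T lt N (H : @SS T lt N) y1 y2 : y1 != y2 -> rank lt y1 = rank lt y2 -> 0 < rank lt y1 ->
  exists x, [/\ rank lt x = (rank lt y1).-1, lt x y1 & lt x y2].
Proof.
move=> Hne E Hy; have HN := rank_le (ss_rk H) y1.
have Hr : (rank lt y1).-1 < N by lia.
  have [a [b [[Ra Rb] [ia ib] Ca Cb Cl]]] := crown H Hr.
have [j1 E1] := Cb y1 (esym (ltn_predK Hy)).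
have [j2 E2] : exists j, y2 = b j by apply: Cb; rewrite -E (ltn_predK Hy).
subst y1 y2.
have [|i /andP [H1 H2]] := BF3 (j1:=j1) (j2:=j2); first by apply: contra Hne => /eqP ->.
by exists (a i); rewrite Ra !Cl Rb H1 H2.
Qed.

Lemma c3u T lt N (H : @SS T lt N) x1 x2 : x1 != x2 -> rank lt x1 = rank lt x2 -> rank lt x1 < N ->
  exists y, [/\ rank lt y = (rank lt x1).+1, lt x1 y & lt x2 y].
Proof.
move=> Hne E Hx; have [a [b [[Ra Rb] [ia ib] Ca Cb Cl]]] := crown H Hx.
have [i1 E1] := Ca x1 erefl.
have [i2 E2] := Ca x2 (esym E).
have [|j /andP [H1 H2]] := BF3u (i1:=i1) (i2:=i2); first by apply: contra Hne => /eqP Ei; rewrite E1 E2 Ei.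
exists (b j); split; [exact: Rb | by rewrite E1 Cl | by rewrite E2 Cl].
Qed.

Lemma c4 T lt N (H : @SS T lt N) x y1 y2 : y1 != y2 -> rank lt x < N ->
  rank lt y1 = (rank lt x).+1 -> rank lt y2 = (rank lt x).+1 -> lt x y1 || lt x y2.
Proof.
move=> Hne Hx E1 E2; have [a [b [[Ra Rb] [ia ib] Ca Cb Cl]]] := crown H Hx.
have [i Ei] := Ca x erefl.
have [j1 F1] := Cb y1 E1.
have [j2 F2] := Cb y2 E2.
subst; rewrite !Cl; apply: BF4; by apply: contra Hne => /eqP ->.
Qed.

Lemma c4u T lt N (H : @SS T lt N) y x1 x2 : x1 != x2 -> rank lt x1 < N ->
  rank lt x2 = rank lt x1 -> rank lt y = (rank lt x1).+1 -> lt x1 y || lt x2 y.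
Proof.
move=> Hne Hx E2 E; have [a [b [[Ra Rb] [ia ib] Ca Cb Cl]]] := crown H Hx.
have [i1 F1] := Ca x1 erefl.
have [i2 F2] := Ca x2 E2.
have [j Fj] := Cb y E.
rewrite F1 F2 Fj !Cl; apply: BF4u; rewrite F1 F2 in Hne; by apply: contra Hne => /eqP ->.
Qed.

Lemma c5 T lt N (H : @SS T lt N) x1 x2 x3 x4 :
  rank lt x2 = rank lt x1 -> rank lt x3 = rank lt x1 -> rank lt x4 = rank lt x1 ->
  [&& x1 != x2, x1 != x3, x1 != x4, x2 != x3, x2 != x4 & x3 != x4] = false.
Proof.
move=> E2 E3 E4; have HN := rank_le (ss_rk H) x1; have HP := ss_pos H.
have Hi : forall (f : 'I_3 -> T) i1 i2 i3 i4, x1 = f i1 -> x2 = f i2 -> x3 = f i3 -> x4 = f i4 ->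
  [&& x1 != x2, x1 != x3, x1 != x4, x2 != x3, x2 != x4 & x3 != x4] = false.
  move=> f i1 i2 i3 i4 -> -> -> ->; apply/negbTE/negP => /and5P [h1 h2 h3 h4 /andP [h5 h6]].
  have nf : forall a b, f a != f b -> a != b by move=> a b; apply: contra => /eqP ->.
  by move: (BF5 i1 i2 i3 i4); rewrite (nf _ _ h1) (nf _ _ h2) (nf _ _ h3) (nf _ _ h4) (nf _ _ h5) (nf _ _ h6).
case: (ltngtP (rank lt x1) N) => [Hlt| |Heq]; last 2 first.
- by lia.
- have Hr : N.-1 < N by lia.
  have [a [b [[Ra Rb] [ia ib] Ca Cb Cl]]] := crown H Hr.
  have E : rank lt x1 = N.-1.+1 by lia.
  have [i1 e1] := Cb x1 E.
  have [i2 e2] := Cb x2 (etrans E2 E).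
  have [i3 e3] := Cb x3 (etrans E3 E).
  have [i4 e4] := Cb x4 (etrans E4 E).
  exact: (Hi _ _ _ _ _ e1 e2 e3 e4).
- have [a [b [[Ra Rb] [ia ib] Ca Cb Cl]]] := crown H Hlt.
  have [i1 e1] := Ca x1 erefl.
  have [i2 e2] := Ca x2 E2.
  have [i3 e3] := Ca x3 E3.
  have [i4 e4] := Ca x4 E4.
  exact: (Hi _ _ _ _ _ e1 e2 e3 e4).
Qed.

Definition inc (T : finType) (lt : rel T) x y := ~~ lt x y && ~~ lt y x.

Lemma dist2_aux T lt N (H : @SS T lt N) s x y : rank lt y = s -> rank lt x + 2 <= s -> lt x y.
Proof.
have Hirr := ss_irr H; have Htr := ss_tr H.
elim: s x y => [|s IH] x y Hy Hx; first by lia.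
have [z Hz Hrz] := rank_pred Hirr Htr Hy.
case: (leqP (rank lt x + 2) s) => Hc.
- exact: (Htr z) (IH x z Hrz Hc) Hz.
- have Hy0 : 0 < rank lt y by lia.
  have [y1 [y2 [Hne E1 E2 L1 L2]]] := c2d H Hy0.
  have HN := rank_le (ss_rk H) y.
  have Hx' : rank lt x < N by lia.
  have E1' : rank lt y1 = (rank lt x).+1 by lia.
  have E2' : rank lt y2 = (rank lt x).+1 by lia.
  by case/orP: (c4 H Hne Hx' E1' E2') => L; [exact: (Htr y1) | exact: (Htr y2)].
Qed.

Lemma dist2 T lt N (H : @SS T lt N) x y : rank lt x + 2 <= rank lt y -> lt x y.
Proof. by move=> h; apply: (dist2_aux H (erefl _) h). Qed.

Lemma no_adj T lt N (H : @SS T lt N) u v w :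
  u != v -> v != w -> u != w -> inc lt u v -> inc lt v w -> inc lt u w ->
  rank lt w != (rank lt u).+1.
Proof.
move=> n1 n2 n3 /andP [i1 i2] /andP [i3 i4] /andP [i5 i6]; apply/eqP => E.
have HN := rank_le (ss_rk H) w.
have Hu : rank lt u < N by lia.
have Hv1 : rank lt u <= rank lt v.
  by rewrite leqNgt; apply/negP => h; apply: (negP i3); apply: (dist2 H); lia.
have Hv2 : rank lt v <= (rank lt u).+1.
  by rewrite leqNgt; apply/negP => h; apply: (negP i1); apply: (dist2 H); lia.
case: (ltngtP (rank lt v) (rank lt u)) => Hc; first by lia.
- have Ev : rank lt v = (rank lt u).+1 by lia.
  have n2' : w != v by rewrite eq_sym.
  by have := @c4 _ _ _ H u w v n2' Hu E Ev; rewrite (negbTE i5) (negbTE i1).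
- by have := @c4u _ _ _ H w u v n1 Hu Hc E; rewrite (negbTE i5) (negbTE i3).
Qed.

Lemma inc_sym (T : finType) (lt : rel T) x y : inc lt x y = inc lt y x.
Proof. by rewrite /inc andbC. Qed.

Lemma same_rank T lt N (H : @SS T lt N) a b c :
  a != b -> a != c -> b != c -> inc lt a b -> inc lt a c -> inc lt b c ->
  rank lt b = rank lt a.
Proof.
move=> n1 n2 n3 i1 i2 i3.
have n1' : b != a by rewrite eq_sym.
have n2' : c != a by rewrite eq_sym.
have n3' : c != b by rewrite eq_sym.
have i1' : inc lt b a by rewrite inc_sym.
have i2' : inc lt c a by rewrite inc_sym.
have i3' : inc lt c b by rewrite inc_sym.
have h1 := no_adj H n2 n3' n1 i2 i3' i1.
have h2 := no_adj H n3 n2' n1' i3 i2' i1'.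
move: i1 => /andP [j1 j2].
have k1 : ~~ (rank lt a + 2 <= rank lt b) by apply/negP => h; apply: (negP j1); exact: (dist2 H h).
have k2 : ~~ (rank lt b + 2 <= rank lt a) by apply/negP => h; apply: (negP j2); exact: (dist2 H h).
move: h1 h2 k1 k2; rewrite -!ltnNge; move: (rank lt a) (rank lt b); clear => p q /eqP h1 /eqP h2 k1 k2; lia.
Qed.

Lemma f1 T lt N (H : @SS T lt N) a b c x :
  a != b -> a != c -> b != c -> inc lt a b -> inc lt a c -> inc lt b c ->
  rank lt x = rank lt a -> [|| x == a, x == b | x == c].
Proof.
move=> n1 n2 n3 i1 i2 i3 Ex.
have Eb := same_rank H n1 n2 n3 i1 i2 i3.
have n3' : c != b by rewrite eq_sym.
have i3' : inc lt c b by rewrite inc_sym.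
have Ec := same_rank H n2 n1 n3' i2 i1 i3'.
have := c5 H Eb Ec Ex; rewrite n1 n2 n3 /=.
by rewrite !(eq_sym x); case: (a == x); case: (b == x); case: (c == x).
Qed.
Lemma ex_min (T : finType) (lt : rel T) (lev : T -> nat) (P : pred T) :
  (forall x y, lt x y -> lev x < lev y) -> forall x0, P x0 ->
  exists x, P x /\ forall y, P y -> ~~ lt y x.
Proof.
move=> Hl x0 P0.
suff: forall n x, lev x < n -> P x -> exists x, P x /\ forall y, P y -> ~~ lt y x.
  by move=> /(_ _ x0 (ltnSn _) P0).
elim=> [//|n IH] x Hx Px.
case: (boolP [exists y, P y && lt y x]) => [/existsP [y /andP [Py Hyx]]|/existsPn Hn].
- apply: (IH y) => //; have := Hl _ _ Hyx; move: Hx; clear; lia.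
- exists x; split => // y Py; by have := Hn y; rewrite Py.
Qed.

Lemma core (T : finType) (lt : rel T) (lev : T -> nat) (N : nat) (Q : {set T})
    (f : T -> T) (bl : T -> nat) :
  transitive lt ->
  (forall x y, lt x y -> lev x < lev y) ->
  (forall x y, lev x + 2 <= lev y -> lt x y) ->
  (forall r, r <= N -> exists x, lev x = r) ->
  (forall y, 0 < lev y -> exists x, lev x = (lev y).-1 /\ ~~ lt x y) ->
  (forall y, 0 < lev y -> exists x1 x2,
     [/\ x1 != x2, lev x1 = (lev y).-1, lev x2 = (lev y).-1, lt x1 y & lt x2 y]) ->
  (forall y1 y2, y1 != y2 -> lev y1 = lev y2 -> 0 < lev y1 ->
     exists x, [/\ lev x = (lev y1).-1, lt x y1 & lt x y2]) ->
  (forall a b c, a \in Q -> b \in Q -> c \in Q -> a != b -> a != c -> b != c ->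
     inc lt a b -> inc lt a c -> inc lt b c -> forall x, lev x = lev a -> x \in Q) ->
  (forall x, f x \in Q) ->
  (forall x y, leR lt x y -> leR lt (f x) (f y)) ->
  (forall q, q \in Q -> f q = q) ->
  (forall q q', q \in Q -> q' \in Q -> q != q' -> inc lt q q' -> bl q = bl q') ->
  (forall q, q \in Q ->
     (exists a c, [/\ a \in Q, c \in Q, a != q, c != q & a != c] /\
                    [/\ inc lt q a, inc lt q c & inc lt a c]) \/
     (forall q1 q2, q1 \in Q -> q2 \in Q -> q1 != q -> q2 != q -> q1 != q2 ->
        bl q1 = bl q -> bl q2 = bl q -> False)) ->
  (forall q, q \in Q -> exists q', [/\ q' \in Q, q' != q & inc lt q q']) ->
  forall b, b < N -> (forall x, lev x = b -> x \in Q) ->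
  forall x, lev x = b.+1 -> x \in Q.
Proof.
move=> Htr L2 L3 L4 C1 C2 C3 F1 Hf1 Hf2 Hf3 B1 B2 T1 b Hb Hfull.
case: (boolP [exists q, (q \in Q) && (lev q == b.+1)]) =>
   [/existsP [q /andP [Hq /eqP Eq]] | /existsPn Hnone].
- have h0 : 0 < lev q by rewrite Eq.
  have [m [Em Hm]] := C1 q h0; rewrite Eq /= in Em.
  have Qm := Hfull m Em.
  have [x1 [x2 [Hne E1 E2 Lt1 Lt2]]] := C2 q h0; rewrite Eq /= in E1 E2.
  have [x [Ex Hx Hxm]] : exists x, [/\ lev x = b, lt x q & x != m].
    case: (x1 =P m) => [e|/eqP ne]; last by exists x1.
    exists x2; split=> //; apply/eqP => e2; by rewrite -e2 Lt2 in Hm.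
  have Qx := Hfull x Ex.
  have Iqm : inc lt q m.
    rewrite /inc Hm andbT; apply/negP => /L2; rewrite Eq Em; clear; lia.
  have Imx : inc lt m x.
    by rewrite /inc; apply/andP; split; apply/negP => /L2; rewrite Ex Em ltnn.
  have Nqm : q != m by apply/eqP => e; move: Eq; rewrite e Em; clear; lia.
  have Nqx : q != x by apply/eqP => e; move: Eq; rewrite e Ex; clear; lia.
  have Nmx : m != x by rewrite eq_sym.
  have Bqm := B1 q m Hq Qm Nqm Iqm.
  have Bmx := B1 m x Qm Qx Nmx Imx.
  case: (B2 q Hq) => [[a [c [[Qa Qc Naq Ncq Nac] [Iqa Iqc Iac]]]] | Hsmall].
  + move=> y Ey; apply: (F1 q a c Hq Qa Qc _ _ Nac Iqa Iqc Iac); rewrite ?Ey ?Eq //.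
    * by rewrite eq_sym.
    * by rewrite eq_sym.
  + exfalso; apply: (Hsmall m x Qm Qx _ _ Nmx).
    * by rewrite eq_sym.
    * by rewrite eq_sym.
    * by [].
    * by rewrite -Bmx.
- exfalso.
  have HnQ : forall q, q \in Q -> lev q != b.+1.
    by move=> q Hq; have := Hnone q; rewrite Hq.
  pose P := fun q => (q \in Q) && (b.+2 <= lev q).
  have Hup : forall w, lev w = b.+1 -> P (f w).
    move=> w Ew; have h0 : 0 < lev w by rewrite Ew.
    have [x1 [x2 [Hne E1 E2 Lt1 Lt2]]] := C2 w h0; rewrite Ew /= in E1 E2.
    have G1 : leR lt x1 (f w).
      by rewrite -(Hf3 x1 (Hfull _ E1)); apply: Hf2; rewrite /leR Lt1 orbT.
    have G2 : leR lt x2 (f w).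
      by rewrite -(Hf3 x2 (Hfull _ E2)); apply: Hf2; rewrite /leR Lt2 orbT.
    rewrite /P Hf1 /= ltnNge; apply/negP => Hle.
    have Hne' := HnQ _ (Hf1 w).
    have Hle' : lev (f w) <= b.
      move: Hle Hne'; move: (lev (f w)); clear => k h1 /eqP h2; lia.
    move: G1 G2; rewrite /leR => /orP [/eqP e1|/L2 l1]; last by move: l1 Hle'; rewrite E1; clear; lia.
    case/orP => [/eqP e2|/L2 l2]; last by move: l2 Hle'; rewrite E2; clear; lia.
    by move: Hne; rewrite e1 e2 eqxx.
  have [w0 Ew0] := L4 b.+1 Hb.
  have [u [Pu Mu]] := ex_min L2 (Hup w0 Ew0).
  move: (Pu) => /andP [Qu Lu].
  have [v [Qv Hvu Iuv]] := T1 u Qu.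
  move: (Iuv) => /andP [Nuv Nvu].
  have Pv : P v.
    rewrite /P Qv /=.
    have h1 : ~~ (lev v + 2 <= lev u) by apply/negP => /L3; rewrite (negbTE Nvu).
    have h2 := HnQ v Qv.
    move: h1 h2 Lu; move: (lev v) (lev u); clear => p q h1 /eqP h2 h3; lia.
  pose P' := fun y => P y && leR lt y v.
  have P'v : P' v by rewrite /P' Pv /leR eqxx.
  have [v' [P'v' Mv']] := ex_min L2 P'v.
  move: P'v' => /andP [Pv' Lv'].
  have Mv'' : forall y, P y -> ~~ lt y v'.
    move=> y Py; apply/negP => Hy; have := Mv' y; rewrite /P' Py Hy /=.
    suff Hyv : leR lt y v by move=> /(_ Hyv).
    move: Lv'; rewrite /leR => /orP [/eqP <-|Hv'v]; first by rewrite /leR Hy orbT.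
    by rewrite /leR (Htr _ _ _ Hy Hv'v) orbT.
  have Huv' : u != v'.
    apply/eqP => e; subst v'; move: Lv'; rewrite /leR (negbTE Nuv) orbF.
    by rewrite eq_sym (negbTE Hvu).
  move: (Pv') => /andP [Qv' Lv'2].
  have [w [Ew Lw1 Lw2]] : exists w, [/\ lev w = b.+1, lt w u & lt w v'].
    case Hu3: (b.+3 <= lev u); case Hv3: (b.+3 <= lev v').
    * exists w0; split => //; apply: L3; rewrite Ew0; [move: Hu3 | move: Hv3]; clear; lia.
    * have Ev : lev v' = b.+2 by move: Hv3 Lv'2; move: (lev v'); clear => k; lia.
      have h0 : 0 < lev v' by rewrite Ev.
      have [x1 [x2 [_ E1 _ Lt1 _]]] := C2 v' h0; rewrite Ev /= in E1.
      exists x1; split => //; apply: L3; rewrite E1; move: Hu3; clear; lia.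
    * have Eu : lev u = b.+2 by move: Hu3 Lu; move: (lev u); clear => k; lia.
      have h0 : 0 < lev u by rewrite Eu.
      have [x1 [x2 [_ E1 _ Lt1 _]]] := C2 u h0; rewrite Eu /= in E1.
      exists x1; split => //; apply: L3; rewrite E1; move: Hv3; clear; lia.
    * have Eu : lev u = b.+2 by move: Hu3 Lu; move: (lev u); clear => k; lia.
      have Ev : lev v' = b.+2 by move: Hv3 Lv'2; move: (lev v'); clear => k; lia.
      have h0 : 0 < lev u by rewrite Eu.
      have [x [Ex Lx1 Lx2]] := C3 u v' Huv' (etrans Eu (esym Ev)) h0.
      by exists x; rewrite Ex Eu.
  have Fu : f w = u.
    have := Hf2 w u; rewrite /leR Lw1 orbT (Hf3 u Qu) => /(_ isT) /orP [/eqP //|Hl].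
    by have := Mu _ (Hup w Ew); rewrite Hl.
  have Fv : f w = v'.
    have := Hf2 w v'; rewrite /leR Lw2 orbT (Hf3 v' Qv') => /(_ isT) /orP [/eqP //|Hl].
    by have := Mv'' _ (Hup w Ew); rewrite Hl.
  by move: Huv'; rewrite -Fu -Fv eqxx.
Qed.

Definition flip (T : finType) (lt : rel T) : rel T := fun x y => lt y x.

Lemma inc_flip (T : finType) (lt : rel T) x y : inc (flip lt) x y = inc lt x y.
Proof. by rewrite /inc /flip andbC. Qed.

Lemma leR_flip (T : finType) (lt : rel T) x y : leR (flip lt) x y = leR lt y x.
Proof. by rewrite /leR /flip eq_sym. Qed.

Lemma lev_ne T lt N (H : @SS T lt N) r : r <= N -> exists x, rank lt x = r.
Proof.
move=> Hr; have HP := ss_pos H.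
case: (ltngtP r N) => [Hlt|//|Heq].
- have [a [b [[Ra Rb] _ _ _ _]]] := crown H Hlt; by exists (a o0).
- by lia.
- have Hr' : N.-1 < N by lia.
  have [a [b [[Ra Rb] _ _ _ _]]] := crown H Hr'; exists (b o0); rewrite Rb; lia.
Qed.

Lemma F1Q T lt N (H : @SS T lt N) (Q : {set T}) a b c :
  a \in Q -> b \in Q -> c \in Q -> a != b -> a != c -> b != c ->
  inc lt a b -> inc lt a c -> inc lt b c -> forall x, rank lt x = rank lt a -> x \in Q.
Proof.
move=> Qa Qb Qc n1 n2 n3 i1 i2 i3 x Ex.
by case/or3P: (f1 H n1 n2 n3 i1 i2 i3 Ex) => /eqP ->.
Qed.

Definition Blk (T : finType) (lt : rel T) (Q : {set T}) (bl : T -> nat) :=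
  [/\ (forall q q', q \in Q -> q' \in Q -> q != q' -> inc lt q q' -> bl q = bl q'),
      (forall q, q \in Q ->
        (exists a c, [/\ a \in Q, c \in Q, a != q, c != q & a != c] /\
                     [/\ inc lt q a, inc lt q c & inc lt a c]) \/
        (forall q1 q2, q1 \in Q -> q2 \in Q -> q1 != q -> q2 != q -> q1 != q2 ->
           bl q1 = bl q -> bl q2 = bl q -> False)) &
      (forall q, q \in Q -> exists q', [/\ q' \in Q, q' != q & inc lt q q'])].

Lemma Blk_flip (T : finType) (lt : rel T) Q bl : Blk lt Q bl -> Blk (flip lt) Q bl.
Proof.
case=> B1 B2 T1; split.
- by move=> q q' ? ? ?; rewrite (inc_flip lt); apply: B1.
- by move=> q Hq; case: (B2 q Hq) => [[a [c [h1 h2]]]|h]; [left; exists a, c; rewrite !(inc_flip lt) | right].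
- by move=> q Hq; have [q' h] := T1 q Hq; exists q'; rewrite (inc_flip lt).
Qed.

Definition Full (T : finType) (lt : rel T) (Q : {set T}) r := forall x, rank lt x = r -> x \in Q.

Lemma up_step T lt N (H : @SS T lt N) (Q : {set T}) f bl :
  (forall x, f x \in Q) -> (forall x y, leR lt x y -> leR lt (f x) (f y)) ->
  (forall q, q \in Q -> f q = q) -> Blk lt Q bl ->
  forall b, b < N -> Full lt Q b -> Full lt Q b.+1.
Proof.
move=> Hf1 Hf2 Hf3 [B1 B2 T1] b Hb Hfull.
apply: (core (lev := rank lt) (ss_tr H) (rank_lt (ss_irr H) (ss_tr H)) (fun x y => @dist2 _ _ _ H x y)
   (lev_ne H) (c1d H) (c2d H) (fun y1 y2 => @c3d _ _ _ H y1 y2) (F1Q H (Q := Q)) Hf1 Hf2 Hf3 B1 B2 T1 Hb Hfull).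
Qed.

Lemma down_step T lt N (H : @SS T lt N) (Q : {set T}) f bl :
  (forall x, f x \in Q) -> (forall x y, leR lt x y -> leR lt (f x) (f y)) ->
  (forall q, q \in Q -> f q = q) -> Blk lt Q bl ->
  forall b, 0 < b <= N -> Full lt Q b -> Full lt Q b.-1.
Proof.
move=> Hf1 Hf2 Hf3 HB b /andP [Hb0 HbN] Hfull.
have HR := rank_le (ss_rk H).
have Htr := ss_tr H.
case: (Blk_flip HB) => B1 B2 T1.
have Tr' : transitive (flip lt) by move=> y x z h1 h2; exact: Htr h2 h1.
have L2' : forall x y, flip lt x y -> N - rank lt x < N - rank lt y.
  move=> x y /(rank_lt (ss_irr H) Htr) h; have := HR x; have := HR y; lia.
have L3' : forall x y, N - rank lt x + 2 <= N - rank lt y -> flip lt x y.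
  move=> x y h; apply: (dist2 H); have := HR x; have := HR y; lia.
have L4' : forall r, r <= N -> exists x, N - rank lt x = r.
  move=> r hr; have [|x hx] := lev_ne H (r := N - r); first lia.
  exists x; rewrite hx; lia.
have C1' : forall y, 0 < N - rank lt y -> exists x, N - rank lt x = (N - rank lt y).-1 /\ ~~ flip lt x y.
  move=> y hy; have [|x [hx hl]] := c1u H (x := y); first lia.
  exists x; split => //; rewrite hx; lia.
have C2' : forall y, 0 < N - rank lt y -> exists x1 x2,
     [/\ x1 != x2, N - rank lt x1 = (N - rank lt y).-1, N - rank lt x2 = (N - rank lt y).-1,
         flip lt x1 y & flip lt x2 y].
  move=> y hy; have [|x1 [x2 [hn h1 h2 l1 l2]]] := c2u H (x := y); first lia.
  exists x1, x2; split => //; [rewrite h1 | rewrite h2]; lia.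
have C3' : forall y1 y2, y1 != y2 -> N - rank lt y1 = N - rank lt y2 -> 0 < N - rank lt y1 ->
     exists x, [/\ N - rank lt x = (N - rank lt y1).-1, flip lt x y1 & flip lt x y2].
  move=> y1 y2 hn he hp.
  have he' : rank lt y1 = rank lt y2 by have := HR y1; have := HR y2; lia.
  have [|x [hx l1 l2]] := c3u H hn he'; first lia.
  exists x; split => //; rewrite hx; lia.
have F1' : forall a b c, a \in Q -> b \in Q -> c \in Q -> a != b -> a != c -> b != c ->
     inc (flip lt) a b -> inc (flip lt) a c -> inc (flip lt) b c ->
     forall x, N - rank lt x = N - rank lt a -> x \in Q.
  move=> a b' c Qa Qb Qc n1 n2 n3; rewrite !(inc_flip lt) => i1 i2 i3 x hx.
  apply: (F1Q H Qa Qb Qc n1 n2 n3 i1 i2 i3); have := HR x; have := HR a; lia.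
have Hf2' : forall x y, leR (flip lt) x y -> leR (flip lt) (f x) (f y).
  by move=> x y; rewrite !(leR_flip lt); apply: Hf2.
have Hb' : N - b < N by lia.
have Hfull' : forall x, N - rank lt x = N - b -> x \in Q.
  move=> x hx; apply: Hfull; have := HR x; lia.
have := core Tr' L2' L3' L4' C1' C2' C3' F1' Hf1 Hf2' Hf3 B1 B2 T1 Hb' Hfull'.
move=> Hc x hx; apply: Hc; have := HR x; lia.
Qed.
Lemma sec3 (U : finType) (ltU : rel U) (B : {set U}) n (R : rel ('I_3 * 'I_n.+1)) :
  section_rel R -> ord_iso ltU B R [set: ('I_3 * 'I_n.+1)%type] ->
  forall u, u \in B -> exists u1 u2,
    [/\ u1 \in B, u2 \in B, u1 != u, u2 != u & u1 != u2] /\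
    [/\ inc ltU u u1, inc ltU u u2 & inc ltU u1 u2].
Proof.
move=> [_ _ Hanti _ _] [h [hinj him hpres]] u Hu.
have Hs : forall c, exists2 w, w \in B & h w = c.
  move=> c; have : c \in h @: B by rewrite him inE.
  by case/imsetP => w Hw ->; exists w.
have Nh : forall x y, h x != h y -> x != y by move=> x y; apply: contra => /eqP ->.
case E: (h u) => [i kk].
have [u1 H1 E1] := Hs (succ3 i, kk).
have [u2 H2 E2] := Hs (succ3 (succ3 i), kk).
have /and3P [d1 d2 d3] := BF6 i.
exists u1, u2; split; first split => //.
- by apply: Nh; rewrite E1 E xpair_eqE eqxx andbT eq_sym.
- by apply: Nh; rewrite E2 E xpair_eqE eqxx andbT eq_sym.
- by apply: Nh; rewrite E1 E2 xpair_eqE eqxx andbT.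
- by split; rewrite /inc -!hpres // ?E ?E1 ?E2 !Hanti.
Qed.

Lemma ac2_facts (U : finType) (ltU : rel U) (B : {set U}) :
  ord_iso ltU B AC2_lt [set: bool] ->
  (forall u1 u2 u3, u1 \in B -> u2 \in B -> u3 \in B ->
      u1 != u2 -> u1 != u3 -> u2 != u3 -> False) /\
  (forall u, u \in B -> exists u', [/\ u' \in B, u' != u & inc ltU u u']).
Proof.
move=> [h [hinj him hpres]]; split.
- move=> u1 u2 u3 H1 H2 H3 n1 n2 n3.
  have Nh : forall x y, x \in B -> y \in B -> x != y -> h x != h y.
    by move=> x y hx hy; apply: contra => /eqP e; apply/eqP; exact: hinj.
  move: (Nh _ _ H1 H2 n1) (Nh _ _ H1 H3 n2) (Nh _ _ H2 H3 n3).
  by case: (h u1); case: (h u2); case: (h u3).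
- move=> u Hu.
  have : ~~ h u \in h @: B by rewrite him inE.
  case/imsetP => w Hw Ew; exists w; split => //.
  + by apply/eqP => e; move: Ew; rewrite e; case: (h u).
  + by rewrite /inc -!hpres.
Qed.

Theorem corollary5p5 (T : finType) (lt : rel T) (Q : {set T}) :
  six_stack lt -> is_retract lt Q -> Q != [set: T] ->
  (exists (U : finType) (ltU : rel U),
      tower_of_sections ltU /\ ord_iso lt Q ltU [set: U]) ->
  exists (U : finType) (ltU : rel U),
    four_tower ltU /\ ord_iso lt Q ltU [set: U].
Proof.
move=> [[Hirr Htr] [N [HN [Hrk Hcr]]]] [f [Hf1 Hf2 Hf3]] HQ
  [U [ltU [[HsoU [k [blk [Hk Hgood Hord]]]] Hiso]]].
have H : SS lt N by split.
move: (Hiso) => [g [ginj gim gpres]].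
exists U, ltU; split => //; split => //; exists k, blk; split => // b0.
case: (Hgood b0) => // [[n [R [Hn HR Hh]]]]; exfalso.
have Hpull : forall u, exists2 q, q \in Q & g q = u.
  move=> u; have : u \in g @: Q by rewrite gim inE.
  by case/imsetP => q Hq ->; exists q.
have Qinc : forall q q', q \in Q -> q' \in Q -> inc lt q q' = inc ltU (g q) (g q').
  by move=> q q' h1 h2; rewrite /inc !gpres.
have Ng : forall q q', g q != g q' -> q != q' by move=> q q'; apply: contra => /eqP ->.
have Ng' : forall q q', q \in Q -> q' \in Q -> q != q' -> g q != g q'.
  by move=> q q' h1 h2; apply: contra => /eqP e; apply/eqP; exact: ginj.
pose bl := fun q => nat_of_ord (blk (g q)).
have Hsec : forall q, q \in Q -> forall n' (R' : rel ('I_3 * 'I_n'.+1)),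
    section_rel R' -> ord_iso ltU [set x | blk x == blk (g q)] R' setT ->
    exists a c, [/\ a \in Q, c \in Q, a != q, c != q & a != c] /\
                [/\ inc lt q a, inc lt q c & inc lt a c].
  move=> q Hq n' R' HR' Hh'.
  have Hgq : g q \in [set x | blk x == blk (g q)] by rewrite inE.
  have [u1 [u2 [[H1 H2 n1 n2 n12] [i1 i2 i3]]]] := sec3 HR' Hh' Hgq.
  have [a Qa Ea] := Hpull u1; have [c Qc Ec] := Hpull u2.
  exists a, c; split; split => //.
  - by apply: Ng; rewrite Ea.
  - by apply: Ng; rewrite Ec.
  - by apply: Ng; rewrite Ea Ec.
  - by rewrite Qinc // Ea.
  - by rewrite Qinc // Ec.
  - by rewrite Qinc // Ea Ec.
have HB : Blk lt Q bl.
  split.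
  - move=> q q' Hq Hq' Hne; rewrite Qinc // /inc => /andP [a1 a2].
    apply/eqP; apply: contraT => hne.
    have hne' : blk (g q) != blk (g q') by apply: contra hne => /eqP e; rewrite /bl e.
    have hne'' : blk (g q') != blk (g q) by rewrite eq_sym.
    rewrite (Hord _ _ hne') in a1; rewrite (Hord _ _ hne'') in a2.
    move: a1 a2 hne; rewrite /bl; move: (nat_of_ord (blk (g q))) (nat_of_ord (blk (g q'))).
    by clear => p p'; rewrite -!leqNgt => h1 h2; rewrite eqn_leq h1 h2.
  - move=> q Hq; case: (Hgood (blk (g q))) => [Hac | [n' [R' [_ HR' Hh']]]]; last first.
      by left; exact: (Hsec q Hq n' R' HR' Hh').
    right; have [Hsmall _] := ac2_facts Hac.
    move=> q1 q2 Q1 Q2 n1 n2 n12 e1 e2.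
    apply: (Hsmall (g q1) (g q2) (g q)).
    + by rewrite inE; apply/eqP/ord_inj.
    + by rewrite inE; apply/eqP/ord_inj.
    + by rewrite inE.
    + exact: Ng'.
    + exact: Ng'.
    + exact: Ng'.
  - move=> q Hq; case: (Hgood (blk (g q))) => [Hac | [n' [R' [_ HR' Hh']]]].
    + have [_ Hpart] := ac2_facts Hac.
      have [|u [Hu Nu Iu]] := Hpart (g q); first by rewrite inE.
      have [q' Qq' Eq'] := Hpull u.
      exists q'; split => //; first by apply: Ng; rewrite Eq'.
      by rewrite Qinc // Eq'.
    + have [a [c [[Qa _ Na _ _] [Ia _ _]]]] := Hsec q Hq n' R' HR' Hh'.
      by exists a.
have [r0 [Hr0 Hfull0]] : exists r, r <= N /\ Full lt Q r.
  case: Hh => h [hinj him hpres].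
  have : (o0, ord0) \in h @: [set x | blk x == b0] by rewrite him inE.
  case/imsetP => w Hw _.
  have [q0 Q0 E0] := Hpull w.
  have Hb : blk (g q0) = b0 by move: Hw; rewrite inE E0 => /eqP.
  have Hh2 : ord_iso ltU [set x | blk x == blk (g q0)] R setT.
    by rewrite Hb; exists h.
  have [a [c [[Qa Qc Na Nc Nac] [I1 I2 I3]]]] := Hsec q0 Q0 n R HR Hh2.
  exists (rank lt q0); split; first exact: rank_le Hrk q0.
  have Na' : q0 != a by rewrite eq_sym.
  have Nc' : q0 != c by rewrite eq_sym.
  by move=> x Ex; apply: (F1Q H Q0 Qa Qc Na' Nc' Nac I1 I2 I3).
have Up : forall d, r0 + d <= N -> Full lt Q (r0 + d).
  elim=> [|d IH] hd; first by rewrite addn0.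
  rewrite addnS; apply: (up_step H Hf1 Hf2 Hf3 HB); first by lia.
  apply: IH; lia.
have Down : forall d, d <= r0 -> Full lt Q (r0 - d).
  elim=> [|d IH] hd; first by rewrite subn0.
  have -> : r0 - d.+1 = (r0 - d).-1 by lia.
  apply: (down_step H Hf1 Hf2 Hf3 HB); first by apply/andP; split; lia.
  apply: IH; lia.
move/negP: HQ; apply; apply/eqP/setP => x; rewrite inE.
have Hx := rank_le Hrk x.
case: (leqP r0 (rank lt x)) => hc.
- by apply: (Up (rank lt x - r0)); lia.
- by apply: (Down (r0 - rank lt x)); lia.
Qed.
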